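(* Let $0\le d\le n-1$ and $x_1<\cdots<x_n$ real, $\mathcal{X}=\{x_1,\dots,x_n\}$. Let $A_{d,n}(\mathcal{X})$ be the $(n-d)\times(n-d)$ matrix with entries $h_r(x_i,x_{i+1},\dots,x_{i+d})$, rows indexed by $0\le r\le n-d-1$ and columns by $1\le i\le n-d$. Then \[\det A_{d,n}(\mathcal{X})=\prod_{\substack{1\le i<j\le n\\ j-i\ge d+1}}(x_j-x_i).\] In particular, $A_{d,n}(\mathcal{X})$ is invertible whenever the $x_r$ are pairwise distinct.
   Context: $h_r$ denotes the complete homogeneous symmetric polynomial of degree $r$ (with $h_0=1$). An empty product equals $1$. *)

(* Defs.v *)
From HB Require Import structures.
From mathcomp Require Import all_boot all_order all_algebra.
From mathcomp Require Import all_classical all_reals.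
Set Implicit Arguments. Unset Strict Implicit. Unset Printing Implicit Defensive.
Import Order.TTheory GRing.Theory Num.Theory.
Local Open Scope ring_scope.

(* Complete homogeneous symmetric polynomial h_r evaluated at y_0,...,y_{m-1}:
   the sum, over all exponent vectors k = (k_0,...,k_{m-1}) of naturals with
   k_0 + ... + k_{m-1} = r, of the monomial y_0^k_0 ... y_{m-1}^k_{m-1}.
   (Each k_j <= r, so the exponents range over 'I_r.+1.)  h_0 = 1. *)
Definition hsym (R : comRingType) (m r : nat) (y : 'I_m -> R) : R :=
  \sum_(k : {ffun 'I_m -> 'I_r.+1} | (\sum_(j < m) (k j : nat) == r)%N)
     \prod_(j < m) y j ^+ k j.

(* The (n-d) x (n-d) matrix A_{d,n}(X), 0-indexed: entry (r, i) is
   h_r(x_i, x_{i+1}, ..., x_{i+d}). Here x_0 < ... < x_{n-1} are the points. *)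
Definition Amat (R : comRingType) (d n : nat) (x : nat -> R) : 'M[R]_(n - d) :=
  \matrix_(r < n - d, i < n - d) hsym r (fun k : 'I_d.+1 => x (i + k)%N).

(* Main.v *)
Require Import Defs.
From HB Require Import structures.
From mathcomp Require Import all_boot all_order all_algebra.
From mathcomp Require Import all_classical all_reals.
From mathcomp Require Import ring zify.
Import Order.TTheory GRing.Theory Num.Theory.
Set Implicit Arguments. Unset Strict Implicit. Unset Printing Implicit Defensive.
Local Open Scope ring_scope.


Lemma polyCX (R : comRingType) (c : R) n : c%:P ^+ n = (c ^+ n)%:P.
Proof. by rewrite rmorphXn. Qed.

Definition gp (R : comRingType) (N : nat) (a : R) : {poly R} :=
  \sum_(k < N) (a%:P * 'X) ^+ k.

Lemma gpE (R : comRingType) N (a : R) k :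
  (gp N a)`_k = if (k < N)%N then a ^+ k else 0.
Proof.
rewrite /gp coef_sum.
under eq_bigr => i _ do rewrite exprMn polyCX coefCM coefXn mulr_natr mulrb.
rewrite -big_mkcond /=.
case: ifP => hk.
  by rewrite (big_pred1 (Ordinal hk)) // => i; rewrite /= eq_sym.
rewrite big_pred0 // => i; apply/negbTE/eqP => ek.
by move: (ltn_ord i); rewrite -ek hk.
Qed.

Lemma coef_agreeM (R : comRingType) (M : nat) (p q p' q' : {poly R}) :
  (forall k, (k < M)%N -> p`_k = p'`_k) ->
  (forall k, (k < M)%N -> q`_k = q'`_k) ->
  forall k, (k < M)%N -> (p * q)`_k = (p' * q')`_k.
Proof.
move=> hp hq k hk; rewrite !coefM; apply: eq_bigr => j _.
have hj : (j <= k)%N by rewrite -ltnS.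
rewrite hp ?hq //; first by apply: leq_ltn_trans hk; apply: leq_subr.
exact: leq_ltn_trans hj hk.
Qed.

Lemma hsym_coef (R : comRingType) m r (y : 'I_m -> R) :
  hsym r y = (\prod_(j < m) gp r.+1 (y j))`_r.
Proof.
rewrite /hsym /gp bigA_distr_bigA /= coef_sum.
have E : forall f : {ffun 'I_m -> 'I_r.+1},
   \prod_(j < m) ((y j)%:P * 'X) ^+ f j =
   (\prod_(j < m) y j ^+ f j)%:P * 'X ^+ (\sum_(j < m) (f j : nat))%N.
  move=> f; rewrite -prodrXr rmorph_prod -big_split /=.
  by apply: eq_bigr => j _; rewrite exprMn polyCX.
under [RHS]eq_bigr => f _ do rewrite E coefCM coefXn mulr_natr mulrb eq_sym.
by rewrite -big_mkcond.
Qed.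

Lemma hsym_coefN (R : comRingType) m r (y : 'I_m -> R) N :
  (r < N)%N -> hsym r y = (\prod_(j < m) gp N (y j))`_r.
Proof.
move=> hr; rewrite hsym_coef.
pose K (p q : {poly R}) := forall k, (k < r.+1)%N -> p`_k = q`_k.
suff : K (\prod_(j < m) gp r.+1 (y j)) (\prod_(j < m) gp N (y j)) by apply.
apply: (big_ind2 K) => //.
  by move=> p1 q1 p2 q2 h1 h2; apply: coef_agreeM.
move=> j _ k hk; rewrite !gpE hk.
by rewrite (leq_trans hk hr).
Qed.

Lemma geo (R : comRingType) N (a : R) :
  gp N a = 1 - (a%:P * 'X) ^+ N + (a%:P * 'X) * gp N a.
Proof.
rewrite /gp; set t := a%:P * 'X.
have h := subrX1 t N.
have -> : 1 - t ^+ N = (1 - t) * \sum_(i < N) t ^+ i.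
  by rewrite -opprB h -mulNr opprB.
ring.
Qed.

Lemma gp_diff (R : comRingType) N (a b : R) k : (k < N)%N ->
  (gp N a - gp N b)`_k = ((a - b)%:P * 'X * (gp N a * gp N b))`_k.
Proof.
move=> hk.
set A := gp N a; set B := gp N b.
have E : A - B = (a - b)%:P * 'X * (A * B) +
     (A * (b ^+ N)%:P - B * (a ^+ N)%:P) * 'X ^+ N.
  have ha := geo N a; have hb := geo N b.
  rewrite -/A in ha; rewrite -/B in hb.
  have ea : (a%:P * 'X) ^+ N = (a ^+ N)%:P * 'X ^+ N by rewrite exprMn polyCX.
  have eb : (b%:P * 'X) ^+ N = (b ^+ N)%:P * 'X ^+ N by rewrite exprMn polyCX.
  rewrite ea in ha; rewrite eb in hb.
  rewrite rmorphB /=.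
  set X := 'X ^+ N in ha hb *.
  set ta := a%:P in ha *; set tb := b%:P in hb *.
  set sa := (a ^+ N)%:P in ha *; set sb := (b ^+ N)%:P in hb *.
  have ea' : sa * X = 1 + ta * 'X * A - A by rewrite [X in _ - X]ha; ring.
  have eb' : sb * X = 1 + tb * 'X * B - B by rewrite [X in _ - X]hb; ring.
  have -> : (A * sb - B * sa) * X = A * (sb * X) - B * (sa * X) by ring.
  rewrite ea' eb'; ring.
rewrite E coefD coefMXn hk addr0.
done.
Qed.

Definition Pw (R : comRingType) N (x : nat -> R) i m :=
  \prod_(j < m) gp N (x (i + j)%N).

Lemma Pw0 (R : comRingType) N (x : nat -> R) i m : (0 < N)%N ->
  (Pw N x i m)`_0 = 1.
Proof.
move=> hN; rewrite /Pw; apply: (big_ind (fun p : {poly R} => p`_0 = 1)).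
- by rewrite coef1.
- by move=> p q hp hq; rewrite coefM big_ord1 hp hq mulr1.
- by move=> j _; rewrite gpE hN expr0.
Qed.

Lemma PwSr (R : comRingType) N (x : nat -> R) i m :
  Pw N x i m.+1 = Pw N x i m * gp N (x (i + m)%N).
Proof. by rewrite /Pw big_ord_recr. Qed.

Lemma PwSl (R : comRingType) N (x : nat -> R) i m :
  Pw N x i m.+1 = gp N (x i) * Pw N x i.+1 m.
Proof.
rewrite /Pw big_ord_recl addn0; congr (_ * _).
by apply: eq_bigr => j _; rewrite lift0 addSnnS.
Qed.

Lemma colPw_id (R : comRingType) N (x : nat -> R) i d r : (r.+1 < N)%N ->
  (Pw N x i.+1 d.+1)`_r.+1 - (Pw N x i d.+1)`_r.+1 =
  (x (i + d.+1)%N - x i) * (Pw N x i d.+2)`_r.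
Proof.
move=> hr.
rewrite (PwSl _ _ i d.+1) (PwSl _ _ i d) PwSr addSnnS.
set Q := Pw N x i.+1 d.
set ga := gp N (x (i + d.+1)%N); set gb := gp N (x i).
rewrite -coefB.
have -> : Q * ga - gb * Q = Q * (ga - gb) by ring.
rewrite (@coef_agreeM _ N Q (ga - gb) Q ((x (i + d.+1)%N - x i)%:P * 'X * (ga * gb))) //;
  last by move=> k hk; apply: gp_diff.
have -> : Q * ((x (i + d.+1)%N - x i)%:P * 'X * (ga * gb)) =
   (x (i + d.+1)%N - x i)%:P * ('X * (gb * (Q * ga))) by ring.
by rewrite coefCM coefXM.
Qed.

Lemma prod_split (R : comRingType) (F : nat -> nat -> R) K d :
  \prod_(i < K + d.+1) \prod_(j < K + d.+1 | (i + d < j)%N) F i j =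
  \prod_(i < K) F i (i + d.+1)%N *
  \prod_(i < K + d.+1) \prod_(j < K + d.+1 | (i + d.+1 < j)%N) F i j.
Proof.
set L := (K + d.+1)%N.
have inner : forall i : 'I_L,
  \prod_(j < L | (i + d < j)%N) F i j =
  (if (i < K)%N then F i (i + d.+1)%N else 1) *
  \prod_(j < L | (i + d.+1 < j)%N) F i j.
  move=> i.
  have e1 : (if (i < K)%N then F i (i + d.+1)%N else 1) =
            \prod_(j < L | (j == (i + d.+1)%N :> nat)) F i j.
    case: ifP => hi.
      have hl : (i + d.+1 < L)%N by rewrite /L ltn_add2r.
      rewrite (big_pred1 (Ordinal hl)) //.
    rewrite big_pred0 // => j; apply/negbTE/eqP => ej.
    move: (ltn_ord j) hi ej; rewrite /L; lia.
  rewrite e1 big_mkcond [in RHS]big_mkcond [X in _ * X]big_mkcond -big_split /=.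
  apply: eq_bigr => j _.
  have [h|h|h] := ltngtP (i + d.+1) j.
  - have -> : (i + d < j)%N = true by lia.
    by rewrite mul1r.
  - have -> : (i + d < j)%N = false by lia.
    by rewrite mul1r.
  - have -> : (i + d < j)%N = true by lia.
    by rewrite mulr1.
rewrite (eq_bigr _ (fun i _ => inner i)) big_split; congr (_ * _).
rewrite -big_mkcond /=.
by rewrite (big_ord_widen _ (fun i => F i (i + d.+1)%N) (leq_addr d.+1 K : (K <= L)%N)).
Qed.

Definition Sh (R : comRingType) K : 'M[R]_K :=
  \matrix_(i < K, j < K) ((i.+1 == j :> nat)%:R).

Lemma det_USh (R : comRingType) K : \det (1%:M - Sh R K) = 1.
Proof.
rewrite -det_tr det_trig.
  by apply: big1 => i _; rewrite !mxE eqxx (gtn_eqF (ltnSn i)) subr0.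
apply/is_trig_mxP => i j hij; rewrite !mxE.
have -> : (j == i) = false by apply/negbTE/eqP => e; move: hij; rewrite e ltnn.
by rewrite (gtn_eqF (ltnW hij : (i < j.+1)%N)) subrr.
Qed.

Lemma mulSh0 (R : comRingType) K (A : 'M[R]_K.+1) r : (A *m Sh R K.+1) r ord0 = 0.
Proof. by rewrite !mxE; apply: big1 => k _; rewrite !mxE mulr0. Qed.

Lemma mulShS (R : comRingType) K (A : 'M[R]_K.+1) r (j : 'I_K) :
  (A *m Sh R K.+1) r (lift ord0 j) = A r (widen_ord (leqnSn K) j).
Proof.
rewrite !mxE (bigD1 (widen_ord (leqnSn K) j)) //= !mxE lift0 eqxx mulr1.
rewrite big1 ?addr0 // => k hk; rewrite !mxE lift0 eqSS.
case: eqP => e; last by rewrite mulr0.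
by move: hk; rewrite (_ : k = widen_ord (leqnSn K) j) ?eqxx //; apply: val_inj.
Qed.

Definition Bm (R : comRingType) N (x : nat -> R) d K : 'M[R]_K :=
  \matrix_(r < K, i < K) (Pw N x i d.+1)`_r.

Lemma detB (R : comRingType) N (x : nat -> R) K d : (K <= N)%N ->
  \det (Bm N x d K) =
  \prod_(i < K + d) \prod_(j < K + d | (i + d < j)%N) (x j - x i).
Proof.
elim: K d => [|K IH] d hK.
  rewrite det_mx00 add0n; symmetry; apply: big1 => i _.
  apply: big_pred0 => j; apply/negbTE; rewrite -leqNgt.
  have := ltn_ord j; lia.
have hN : (0 < N)%N by apply: leq_trans hK.
set M := Bm N x d K.+1.
have -> : \det M = \det (M *m (1%:M - Sh R K.+1)) by rewrite det_mulmx det_USh mulr1.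
rewrite mulmxBr mulmx1.
set A := M - M *m Sh R K.+1.
have EM : forall r i, M r i = (Pw N x i d.+1)`_r by move=> r i; rewrite /M mxE.
have Ar0 : forall r, A r ord0 = M r ord0.
  by move=> r; rewrite /A mxE [X in _ + X]mxE mulSh0 oppr0 addr0.
have ArS : forall r (j : 'I_K), A r (lift ord0 j) = M r (lift ord0 j) - M r (widen_ord (leqnSn K) j).
  by move=> r j; rewrite /A mxE [X in _ + X]mxE mulShS.
clearbody A M.
have Esub : row' ord0 (col' ord0 A) =
   Bm N x d.+1 K *m diag_mx (\row_(i < K) (x (i + d.+1)%N - x i)).
  apply/matrixP => r i; rewrite mul_mx_diag !mxE ArS !EM !lift0 /=.
  rewrite colPw_id; last by have := ltn_ord r; rewrite /=; lia.
  by rewrite mulrC.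
rewrite (expand_det_row _ ord0) big_ord_recl big1 ?addr0.
  rewrite Ar0 EM Pw0 // mul1r /cofactor /= expr0 mul1r Esub det_mulmx det_diag.
  rewrite IH ?(ltnW hK) // addSnnS (prod_split (fun i j => x j - x i)) mulrC.
  by congr (_ * _); apply: eq_bigr => i _; rewrite mxE.
move=> j _; rewrite ArS !EM !Pw0 // subrr mul0r //.
Qed.

Theorem proposition2p11 (R : realType) (n d : nat) (x : nat -> R) :
  (d < n)%N ->
  (forall i j : nat, (i < j)%N -> (j < n)%N -> x i < x j) ->
  \det (Amat d n x) =
    \prod_(i < n) \prod_(j < n | (i + d < j)%N) (x j - x i)
  /\ Amat d n x \in unitmx.
Proof.
move=> hd hinc.
have hA : Amat d n x = Bm n x d (n - d).
  apply/matrixP => r i; rewrite !mxE /Pw; apply: hsym_coefN.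
  have := ltn_ord r; lia.
have hdet : \det (Amat d n x) =
    \prod_(i < n) \prod_(j < n | (i + d < j)%N) (x j - x i).
  by rewrite hA detB ?leq_subr // subnK // ltnW.
split => //.
rewrite unitmxE hdet unitfE; apply: lt0r_neq0.
apply: prodr_gt0 => i _; apply: prodr_gt0 => j hij; rewrite subr_gt0.
apply: hinc => //; lia.
Qed.
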